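(* Let $f:R\to S$ be a faithfully flat ring homomorphism. If $S$ is Cohen-Macaulay, then so is $R$.
   Context: All rings are commutative with identity. For $x\in R$ let $C(x)$ be the complex $0\to R\to R_x\to 0$ ($R$ in degree $0$, natural localization map); for a finite sequence $\mathbf x=x_1,\dots,x_\ell$ put $C(\mathbf x)=C(x_1)\otimes_R\cdots\otimes_R C(x_\ell)$ and let $H^i_{\mathbf x}(M)$ be the $i$th cohomology of $C(\mathbf x)\otimes_R M$; $\ell(\mathbf x)=\ell$. Let $K(x)$ be $0\to R\xrightarrow{x}R\to 0$ (degrees $1,0$), $K(\mathbf x)=K(x_1)\otimes\cdots\otimes K(x_\ell)$, $H_i(\mathbf x)$ its homology. For $m\ge n$ the chain map $K(\mathbf x^m)\to K(\mathbf x^n)$ ($\mathbf x^m=x_1^m,\dots,x_\ell^m$) is the tensor product of the maps $K(x_i^m)\to K(x_i^n)$ given by multiplication by $x_i^{m-n}$ in degree $1$ and identity in degree $0$. $\mathbf x$ is weakly proregular if for every $n$ there is $m\ge n$ with $H_i(\mathbf x^m)\to H_i(\mathbf x^n)$ zero for all $i\ge1$. $\mathbf x$ is a parameter sequence on $R$ if it is weakly proregular, $(\mathbf x)R\neq R$, and $H^{\ell(\mathbf x)}_{\mathbf x}(R)_p\neq0$ for every prime $p\supseteq(\mathbf x)R$ (the empty sequence is a parameter sequence). It is a strong parameter sequence if $x_1,\dots,x_i$ is a parameter sequence for each $i=1,\dots,\ell(\mathbf x)$. A regular sequence on $M$: each $x_i$ is a non-zero-divisor on $M/(x_1,\dots,x_{i-1})M$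 and $M\neq(\mathbf x)M$. A ring $R$ is Cohen-Macaulay if every strong parameter sequence on $R$ is a regular sequence on $R$. *)

(* Defs.v *)
From HB Require Import structures.
From mathcomp Require Import all_boot all_order all_algebra.
Set Implicit Arguments. Unset Strict Implicit. Unset Printing Implicit Defensive.
Import Order.TTheory GRing.Theory Num.Theory.
Local Open Scope ring_scope.

Section Defs.
Variable R : comPzRingType.

Definition in_ideal (s : seq R) (a : R) : Prop :=
  exists c : nat -> R, a = \sum_(i < size s) c i * s`_i.

Definition prime_ideal (P : R -> Prop) : Prop :=
  [/\ P 0, (forall a b, P a -> P b -> P (a + b)),
      (forall r a, P a -> P (r * a)), ~ P 1 &
      (forall a b, P (a * b) -> P a \/ P b)].

(* ---------- Koszul complex K(x) ----------
   K(x) = K(x_1) (x) ... (x) K(x_l) has basis e_I, I a subset of {0..l-1},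
   e_I in degree #|I|.  A chain is a function c : {set 'I_l} -> R (coefficient
   of e_I); it is homogeneous of degree i if supported on #|I| = i.
   Differential: d(e_I) = sum_{j in I} (-1)^{#{k in I, k<j}} x_j e_{I\{j}},
   i.e. (d c)(J) = sum_{j notin J} (-1)^{#{k in J, k<j}} x_j c(J u {j}). *)
Definition homog (l i : nat) (c : {set 'I_l} -> R) : Prop :=
  forall I : {set 'I_l}, #|I| != i -> c I = 0.

Definition kdiff (l : nat) (x : seq R) (c : {set 'I_l} -> R) (J : {set 'I_l}) : R :=
  \sum_(j : 'I_l | j \notin J) (-1) ^+ #|[set k in J | (k < j)%N]| * x`_j * c (j |: J).

(* the comparison map K(x^m) -> K(x^n) (k = m - n): e_I |-> (prod_{j in I} x_j^k) e_I *)
Definition kmap (l : nat) (x : seq R) (k : nat) (c : {set 'I_l} -> R) (I : {set 'I_l}) : R :=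
  (\prod_(j in I) x`_j ^+ k) * c I.

Definition spow (x : seq R) (m : nat) : seq R := [seq a ^+ m | a <- x].

(* H_i(x^m) -> H_i(x^n) is zero for all i >= 1: every i-cycle of K(x^m) is mapped
   to an i-boundary of K(x^n). *)
Definition weakly_proregular (x : seq R) : Prop :=
  forall n : nat, exists m : nat, (n <= m)%N /\
    forall i : nat, (1 <= i)%N ->
    forall z : {set 'I_(size x)} -> R, homog i z ->
      (forall J, kdiff (spow x m) z J = 0) ->
      exists w : {set 'I_(size x)} -> R, homog i.+1 w /\
        forall J, kdiff (spow x n) w J = kmap x (m - n) z J.

(* ---------- top Cech cohomology H^l_x(R) ----------
   In degree l, C(x) (x) R = R_{x_1} (x) ... (x) R_{x_l} = R_y with y = x_1...x_l,
   and in degree l-1 it is the direct sum of the R_{y_j}, y_j = prod_{i<>j} x_i.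
   H^l_x(R) is the cokernel; an element b/y_j^k maps to b x_j^k / y^k.
   Elements of H^l_x(R) are represented by classes of a/y^n; the class is zero
   iff a/y^n = (sum_j b_j x_j^k)/y^k in R_y for some k, b, i.e. iff
   y^t (a y^k - (sum_j b_j x_j^k) y^n) = 0 for some t. *)
Definition cech_y (x : seq R) : R := \prod_(i < size x) x`_i.

Definition cech_top_zero (x : seq R) (a : R) (n : nat) : Prop :=
  exists (k t : nat) (b : nat -> R),
    cech_y x ^+ t * (a * cech_y x ^+ k
      - (\sum_(j < size x) b j * x`_j ^+ k) * cech_y x ^+ n) = 0.

(* H^l_x(R)_P <> 0 : some element h of H^l_x(R) has h/1 <> 0 in the localization,
   i.e. s h <> 0 for every s notin P. *)
Definition cech_top_loc_nonzero (x : seq R) (P : R -> Prop) : Prop :=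
  exists (a : R) (n : nat), forall s : R, ~ P s -> ~ cech_top_zero x (s * a) n.

Definition parameter_seq (x : seq R) : Prop :=
  x = [::] \/
  [/\ weakly_proregular x, ~ in_ideal x 1 &
      forall P : R -> Prop, prime_ideal P ->
        (forall a, in_ideal x a -> P a) -> cech_top_loc_nonzero x P].

Definition strong_parameter_seq (x : seq R) : Prop :=
  forall i : nat, (1 <= i <= size x)%N -> parameter_seq (take i x).

Definition regular_seq (x : seq R) : Prop :=
  (forall i : nat, (i < size x)%N ->
     forall r : R, in_ideal (take i x) (x`_i * r) -> in_ideal (take i x) r)
  /\ ~ in_ideal x 1.

Definition cohen_macaulay : Prop :=
  forall x : seq R, strong_parameter_seq x -> regular_seq x.

End Defs.

(* ---------- tensor products and (faithful) flatness ----------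
   For an R-module M and a ring map f : R -> S (S an R-module via f), M (x)_R S is
   the free abelian group on M x S modulo the subgroup generated by the
   bilinearity and balancing relations.  An element of the free abelian group is
   a formal sum t : seq (int * (M * S)); its coefficient at p is tcoef t p. *)
Section Tensor.
Variables (R S : comPzRingType) (f : {rmorphism R -> S}).

Definition tcoef (M : lmodType R) (t : seq (int * (M * S))) (p : M * S) : int :=
  \sum_(u <- t | u.2 == p) u.1.

Inductive trel (M : lmodType R) : Type :=
  | RaddL of M & M & S
  | RaddR of M & S & S
  | Rbal of R & M & S.

Definition trel_expand (M : lmodType R) (g : trel M) : seq (int * (M * S)) :=
  match g with
  | RaddL m m' s => [:: (1%:Z, (m + m', s)); (-1, (m, s)); (-1, (m', s))]
  | RaddR m s s' => [:: (1%:Z, (m, s + s')); (-1, (m, s)); (-1, (m, s'))]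
  | Rbal r m s => [:: (1%:Z, (r *: m, s)); (-1, (m, f r * s))]
  end.

Definition tensor_zero (M : lmodType R) (t : seq (int * (M * S))) : Prop :=
  exists rs : seq (int * trel M),
    forall p, tcoef t p = \sum_(u <- rs) u.1 * tcoef (trel_expand u.2) p.

Definition flat_map : Prop :=
  forall (M N : lmodType R) (g : M -> N),
    (forall a b, g (a + b) = g a + g b) -> (forall r a, g (r *: a) = r *: g a) ->
    injective g ->
    forall t : seq (int * (M * S)),
      tensor_zero [seq (u.1, (g u.2.1, u.2.2)) | u <- t] -> tensor_zero t.

Definition faithfully_flat : Prop :=
  flat_map /\
  forall M : lmodType R, (forall t : seq (int * (M * S)), tensor_zero t) ->
    forall m : M, m = 0.

End Tensor.

(* Main.v *)
Require Import Defs.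
From HB Require Import structures.
From mathcomp Require Import all_boot all_order all_algebra.
From mathcomp Require Import ring.
From Stdlib Require Import ClassicalEpsilon.
Set Implicit Arguments. Unset Strict Implicit. Unset Printing Implicit Defensive.
Import GRing.Theory.
Local Open Scope ring_scope.

Section TensorCalc.
Variables (R S : comPzRingType) (f : {rmorphism R -> S}) (M : lmodType R).

Definition tz (F : M * S -> int) : Prop :=
  exists rs : seq (int * trel S M),
    forall p, F p = \sum_(u <- rs) u.1 * tcoef (trel_expand f u.2) p.

Lemma tz0 : tz (fun _ => 0).
Proof. by exists [::] => p; rewrite big_nil. Qed.

Lemma tzD F G : tz F -> tz G -> tz (fun p => F p + G p).
Proof. by move=> [r1 h1] [r2 h2]; exists (r1 ++ r2) => p; rewrite big_cat h1 h2. Qed.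

Lemma tzZ (z : int) F : tz F -> tz (fun p => z * F p).
Proof.
move=> [r1 h1]; exists [seq (z * u.1, u.2) | u <- r1] => p.
by rewrite big_map h1 mulr_sumr; apply: eq_bigr => u _; rewrite mulrA.
Qed.

Lemma tz_ext F G : (forall p, F p = G p) -> tz F -> tz G.
Proof. by move=> e [r h]; exists r => p; rewrite -e. Qed.

Lemma tz_rel g : tz (tcoef (trel_expand f g)).
Proof. by exists [:: (1, g)] => p; rewrite big_seq1 mul1r. Qed.

Definition dl (m : M) (s : S) (p : M * S) : int := ((p == (m, s)) : nat)%:Z.

Lemma tcoefE t p : tcoef t p = \sum_(u <- t) u.1 * dl u.2.1 u.2.2 p.
Proof.
rewrite /tcoef big_mkcond; apply: eq_bigr => -[z [m s]] _ /=.
by rewrite /dl eq_sym; case: eqP => _ /=; rewrite ?mulr1 ?mulr0.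
Qed.

Definition eqv (F G : M * S -> int) := tz (fun p => F p - G p).

Lemma eqv_refl F : eqv F F.
Proof. by apply: tz_ext tz0 => p; rewrite subrr. Qed.

Lemma eqv_sym F G : eqv F G -> eqv G F.
Proof. by move=> h; apply: tz_ext (tzZ (-1) h) => p; rewrite mulN1r opprB. Qed.

Lemma eqv_trans F G H : eqv F G -> eqv G H -> eqv F H.
Proof. by move=> h1 h2; apply: tz_ext (tzD h1 h2) => p; rewrite addrA subrK. Qed.

Lemma eqvD F1 G1 F2 G2 : eqv F1 G1 -> eqv F2 G2 ->
  eqv (fun p => F1 p + F2 p) (fun p => G1 p + G2 p).
Proof. by move=> h1 h2; apply: tz_ext (tzD h1 h2) => p; rewrite opprD addrACA. Qed.

Lemma eqvZ z F G : eqv F G -> eqv (fun p => z * F p) (fun p => z * G p).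
Proof. by move=> h; apply: tz_ext (tzZ z h) => p; rewrite mulrBr. Qed.

Lemma eqv_tz F G : eqv F G -> tz G -> tz F.
Proof. by move=> h1 h2; apply: tz_ext (tzD h1 h2) => p; rewrite subrK. Qed.

Lemma eqv_sum (I : Type) (r : seq I) (F G : I -> M * S -> int) :
  (forall i, eqv (F i) (G i)) ->
  eqv (fun p => \sum_(i <- r) F i p) (fun p => \sum_(i <- r) G i p).
Proof.
move=> h; elim: r => [|i r IH].
  by apply: tz_ext tz0 => p; rewrite !big_nil subrr.
apply: tz_ext (eqvD (h i) IH) => p; by rewrite !big_cons.
Qed.

Lemma dl_addL m m' s : eqv (dl (m + m') s) (fun p => dl m s p + dl m' s p).
Proof.
apply: tz_ext (tz_rel (RaddL m m' s)) => p.
by rewrite tcoefE !big_cons big_nil /= !mul1r !mulN1r addr0 opprD addrA.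
Qed.

Lemma dl_addR m s s' : eqv (dl m (s + s')) (fun p => dl m s p + dl m s' p).
Proof.
apply: tz_ext (tz_rel (RaddR m s s')) => p.
by rewrite tcoefE !big_cons big_nil /= !mul1r !mulN1r addr0 opprD addrA.
Qed.

Lemma dl_bal r m s : eqv (dl (r *: m) s) (dl m (f r * s)).
Proof.
apply: tz_ext (tz_rel (Rbal r m s)) => p.
by rewrite tcoefE !big_cons big_nil /= !mul1r !mulN1r addr0.
Qed.

Lemma dl_0l s : eqv (dl 0 s) (fun _ => 0).
Proof.
have := dl_addL 0 0 s; rewrite addr0 => h.
apply: tz_ext (tzZ (-1) h) => p; rewrite opprD addrA subrr add0r mulN1r opprK.
by rewrite subr0.
Qed.

Lemma dl_0r m : eqv (dl m 0) (fun _ => 0).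
Proof.
have := dl_addR m 0 0; rewrite addr0 => h.
apply: tz_ext (tzZ (-1) h) => p; rewrite opprD addrA subrr add0r mulN1r opprK.
by rewrite subr0.
Qed.

Lemma dl_suml (I : Type) (r : seq I) (F : I -> M) s :
  eqv (dl (\sum_(i <- r) F i) s) (fun p => \sum_(i <- r) dl (F i) s p).
Proof.
elim: r => [|i r IH]; first by apply: tz_ext (dl_0l s) => p; rewrite !big_nil.
rewrite big_cons; apply: eqv_trans (dl_addL _ _ _) _.
apply: tz_ext (eqvD (eqv_refl (dl (F i) s)) IH) => p; by rewrite big_cons.
Qed.

Lemma dl_sumr (I : Type) (r : seq I) m (F : I -> S) :
  eqv (dl m (\sum_(i <- r) F i)) (fun p => \sum_(i <- r) dl m (F i) p).
Proof.
elim: r => [|i r IH]; first by apply: tz_ext (dl_0r m) => p; rewrite !big_nil.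
rewrite big_cons; apply: eqv_trans (dl_addR _ _ _) _.
apply: tz_ext (eqvD (eqv_refl (dl m (F i))) IH) => p; by rewrite big_cons.
Qed.

Lemma tensor_zeroE t : tensor_zero f t <-> tz (fun p => \sum_(u <- t) u.1 * dl u.2.1 u.2.2 p).
Proof.
split=> -[rs h]; exists rs => p; by rewrite -h tcoefE.
Qed.

Section Psi.
Variables (V : zmodType) (phi : M * S -> V).

Definition Psi (t : seq (int * (M * S))) : V := \sum_(u <- t) phi u.2 *~ u.1.

Lemma PsiL (L : seq (M * S)) t : uniq L -> {subset map snd t <= L} ->
  Psi t = \sum_(p <- L) phi p *~ tcoef t p.
Proof.
move=> uL; elim: t => [|u t IH] sub.
  by rewrite /Psi big_nil; symmetry; apply: big1 => p _; rewrite /tcoef big_nil mulr0z.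
have uin : u.2 \in L by apply: sub; rewrite inE eqxx.
rewrite /Psi big_cons -/(Psi t) IH; last by move=> p pin; apply: sub; rewrite inE pin orbT.
rewrite /tcoef.
under [RHS]eq_bigr => p _ do rewrite big_cons.
rewrite (bigD1_seq u.2) //= [in RHS](bigD1_seq u.2) //= eqxx.
rewrite mulrzDr addrA; congr (_ + _).
apply: eq_bigr => p /negbTE np; by rewrite eq_sym np.
Qed.

Lemma Psi_ext t1 t2 : (forall p, tcoef t1 p = tcoef t2 p) -> Psi t1 = Psi t2.
Proof.
move=> h; set L := undup (map snd (t1 ++ t2)).
have uL : uniq L by apply: undup_uniq.
rewrite (@PsiL L t1) ?(@PsiL L t2) //; first by apply: eq_bigr => p _; rewrite h.
  by move=> p pin; rewrite mem_undup map_cat mem_cat pin orbT.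
by move=> p pin; rewrite mem_undup map_cat mem_cat pin.
Qed.

Variable W : V -> Prop.
Hypotheses (W0 : W 0) (WD : forall a b, W a -> W b -> W (a + b))
  (WZ : forall a z, W a -> W (a *~ z)).

Lemma W_sum (I : Type) (r : seq I) (F : I -> V) : (forall i, W (F i)) -> W (\sum_(i <- r) F i).
Proof. by move=> h; elim: r => [|i r IH]; rewrite ?big_nil ?big_cons //; apply: WD. Qed.

Lemma Psi_tz t : tensor_zero f t -> (forall g, W (Psi (trel_expand f g))) -> W (Psi t).
Proof.
move=> [rs h] hg.
have -> : Psi t = Psi (flatten [seq [seq (u.1 * w.1, w.2) | w <- trel_expand f u.2] | u <- rs]).
  apply: Psi_ext => p; rewrite h /tcoef.
  elim: rs {h} => [|u rs IH]; first by rewrite !big_nil.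
  rewrite big_cons /= big_cat IH /=; congr (_ + _).
  rewrite big_map mulr_sumr; apply: eq_big => // w _; by [].
rewrite /Psi; elim: rs {h} => [|u rs IH]; first by rewrite big_nil.
rewrite /= big_cat; apply: WD => //.
rewrite big_map.
have -> : \sum_(j <- trel_expand f u.2) phi (u.1 * j.1, j.2).2 *~ (u.1 * j.1, j.2).1 =
   (\sum_(j <- trel_expand f u.2) phi j.2 *~ j.1) *~ u.1.
  rewrite mulrz_suml; apply: eq_bigr => w _ /=; by rewrite mulrC mulrzA.
by apply: WZ; apply: hg.
Qed.
End Psi.

End TensorCalc.

Definition cdec (P : Prop) : bool := if excluded_middle_informative P then true else false.
Lemma cdecP (P : Prop) : reflect P (cdec P).
Proof. by rewrite /cdec; case: excluded_middle_informative => h; constructor. Qed.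
Arguments cdecP {P}.

Section Crit.
Variables (R S : comPzRingType) (f : {rmorphism R -> S}).
Hypothesis flat : flat_map f.
Variables (I E : finType) (a : E -> I -> R).

Definition sol (u : I -> R) := forall e, \sum_i a e i * u i = 0.

Local Notation NT := {ffun E -> R^o}.
Definition Amap (u : I -> R) : NT := [ffun e => \sum_i a e i * u i].
Definition Mpred (w : NT) : bool := cdec (exists u : I -> R, w = Amap u).
Definition MT := {w : NT | Mpred w}.
HB.instance Definition _ := [isSub of MT for (@proj1_sig NT (fun w => Mpred w))].
HB.instance Definition _ := [Choice of MT by <:].

Lemma MpredP w : reflect (exists u, w = Amap u) (Mpred w).
Proof. exact: cdecP. Qed.

Lemma Amap_lin (c : R) u v : Amap (fun i => c * u i + v i) = c *: Amap u + Amap v.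
Proof.
apply/ffunP => e; rewrite !ffunE /= (_ : c *: _ = (c * \sum_i a e i * u i : R^o)) // mulr_sumr -big_split /=.
by apply: eq_bigr => i _; rewrite mulrDr mulrCA.
Qed.

Lemma Mpred0 : Mpred 0.
Proof.
apply/MpredP; exists (fun _ => 0); apply/ffunP => e; rewrite !ffunE.
by rewrite big1 // => i _; rewrite mulr0.
Qed.

Lemma MpredL c x y : Mpred x -> Mpred y -> Mpred (c *: x + y).
Proof.
move=> /MpredP[u ->] /MpredP[v ->]; apply/MpredP.
by exists (fun i => c * u i + v i); rewrite Amap_lin.
Qed.

Lemma MpredN x : Mpred x -> Mpred (- x).
Proof.
move=> h; have := MpredL (-1) h Mpred0; by rewrite addr0 scaleN1r.
Qed.

Lemma MpredD x y : Mpred x -> Mpred y -> Mpred (x + y).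
Proof. by move=> h1 h2; have := MpredL 1 h1 h2; rewrite scale1r. Qed.

Lemma MpredZ c x : Mpred x -> Mpred (c *: x).
Proof. by move=> h1; have := MpredL c h1 Mpred0; rewrite addr0. Qed.

Definition Mzero : MT := exist _ 0 Mpred0.
Definition Mopp (x : MT) : MT := exist _ (- val x) (MpredN (valP x)).
Definition Madd (x y : MT) : MT := exist _ (val x + val y) (MpredD (valP x) (valP y)).
Definition Mscale (c : R) (x : MT) : MT := exist _ (c *: val x) (MpredZ c (valP x)).

Lemma MaddA : associative Madd.
Proof. by move=> x y z; apply: val_inj; rewrite /= addrA. Qed.
Lemma MaddC : commutative Madd.
Proof. by move=> x y; apply: val_inj; rewrite /= addrC. Qed.
Lemma Madd0 : left_id Mzero Madd.
Proof. by move=> x; apply: val_inj; rewrite /= add0r. Qed.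
Lemma MaddN : left_inverse Mzero Mopp Madd.
Proof. by move=> x; apply: val_inj; rewrite /= addNr. Qed.

HB.instance Definition _ := GRing.isZmodule.Build MT MaddA MaddC Madd0 MaddN.

Lemma MscaleA c d x : Mscale c (Mscale d x) = Mscale (c * d) x.
Proof. by apply: val_inj; rewrite /= scalerA. Qed.
Lemma Mscale1 : left_id 1 Mscale.
Proof. by move=> x; apply: val_inj; rewrite /= scale1r. Qed.
Lemma MscaleDr : right_distributive Mscale +%R.
Proof. by move=> c x y; apply: val_inj; rewrite /= scalerDr. Qed.
Lemma MscaleDl x : {morph Mscale^~ x : c d / c + d}.
Proof. by move=> c d; apply: val_inj; rewrite /= scalerDl. Qed.

HB.instance Definition _ := GRing.Zmodule_isLmodule.Build R MT MscaleA Mscale1 MscaleDr MscaleDl.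

Lemma MT_addE (x y : MT) : val (x + y) = val x + val y. Proof. by []. Qed.
Lemma MT_scaleE c (x : MT) : val (c *: x) = c *: val x. Proof. by []. Qed.

Definition pre (m : MT) : I -> R :=
  proj1_sig (constructive_indefinite_description _ (elimT (MpredP _) (valP m))).
Lemma preP m : val m = Amap (pre m).
Proof.
rewrite /pre; case: constructive_indefinite_description => u /= h; exact: h.
Qed.

Definition phi (p : MT * S) : {ffun I -> S} := [ffun i => p.2 * f (pre p.1 i)].

Definition WS (w : {ffun I -> S}) : Prop :=
  exists cs : seq (S * {ffun I -> R}), (forall c, c \in cs -> sol c.2) /\
     w = \sum_(c <- cs) [ffun i => c.1 * f (c.2 i)].

Lemma WS0 : WS 0.
Proof. by exists [::]; split => //; rewrite big_nil. Qed.
Lemma WSD x y : WS x -> WS y -> WS (x + y).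
Proof.
move=> [c1 [h1 ->]] [c2 [h2 ->]]; exists (c1 ++ c2); split; last by rewrite big_cat.
by move=> c; rewrite mem_cat => /orP[]; [apply: h1|apply: h2].
Qed.
Lemma WSZ x z : WS x -> WS (x *~ z).
Proof.
move=> [c1 [h1 ->]]; exists [seq (c.1 *~ z, c.2) | c <- c1]; split.
  by move=> c /mapP[c' /h1 h ->].
rewrite big_map mulrz_suml; apply: eq_bigr => c _; apply/ffunP => i.
by rewrite ffunMzE !ffunE /= mulrzAl.
Qed.
Lemma WS1 (c : S) (u : I -> R) : sol u -> WS [ffun i => c * f (u i)].
Proof.
move=> h; exists [:: (c, [ffun i => u i])]; split.
  move=> c'; rewrite inE => /eqP -> e /=.
  by under eq_bigr => i _ do rewrite ffunE; apply: h.
rewrite big_seq1; apply/ffunP => i; by rewrite !ffunE.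
Qed.

Lemma sol_pre (u : I -> R) (m : MT) : val m = Amap u -> sol (fun i => pre m i - u i).
Proof.
move=> h e; have := congr1 (fun w : NT => w e) h; rewrite preP !ffunE => h'.
by rewrite (eq_bigr (fun i => a e i * pre m i - a e i * u i)) ?sumrB ?h' ?subrr // => i _; rewrite mulrBr.
Qed.

Lemma Amap_add u v : Amap (fun i => u i + v i) = Amap u + Amap v.
Proof.
apply/ffunP => e; rewrite !ffunE -big_split /=.
by apply: eq_bigr => i _; rewrite mulrDr.
Qed.

Lemma Amap_scale (c : R) u : Amap (fun i => c * u i) = c *: Amap u.
Proof.
apply/ffunP => e; rewrite !ffunE /= (_ : c *: _ = (c * \sum_i a e i * u i : R^o)) // mulr_sumr.
by apply: eq_bigr => i _; rewrite mulrCA.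
Qed.

Lemma WS_rel g : WS (Psi phi (trel_expand f g)).
Proof.
case: g => [m m' s|m s s'|r m s]; rewrite /Psi !big_cons big_nil /= addr0.
- have hs : sol (fun i => pre (m + m') i - (pre m i + pre m' i)).
    by apply: sol_pre; rewrite MT_addE !preP Amap_add.
  have := WS1 s hs; congr WS; apply/ffunP => i.
  by rewrite !ffunE /= rmorphB rmorphD /= mulrBr mulrDr opprD.
- have -> : phi (m, s + s') *~ 1 + (phi (m, s) *~ -1 + phi (m, s') *~ -1) = 0.
    apply/ffunP => i; rewrite !ffunE /=.
    by rewrite mulrDl -opprD subrr.
  exact: WS0.
- have hs : sol (fun i => pre (r *: m) i - r * pre m i).
    by apply: sol_pre; rewrite MT_scaleE !preP Amap_scale.
  have := WS1 s hs; congr WS; apply/ffunP => i.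
  by rewrite !ffunE /= rmorphB rmorphM /= mulrBr mulrA [s * f r]mulrC.
Qed.


Definition ee (e : E) : NT := [ffun e' => ((e == e') : nat)%:R].
Definition colv (i : I) : NT := Amap (fun j => ((i == j) : nat)%:R).
Lemma colP i : Mpred (colv i).
Proof. by apply/MpredP; eexists. Qed.
Definition col i : MT := exist _ (colv i) (colP i).

Lemma colv_dec i : colv i = \sum_e a e i *: ee e.
Proof.
apply/ffunP => e'; rewrite ffunE sum_ffunE (bigD1 i) //= eqxx mulr1.
rewrite big1 ?addr0; last by move=> j /negbTE; rewrite eq_sym => ->; rewrite mulr0.
rewrite (bigD1 e') //= !ffunE eqxx big1 ?addr0.
  by rewrite -[a e' i *: _]/(a e' i * 1) mulr1.
move=> e /negbTE ne; rewrite !ffunE ne.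
by rewrite -[a e i *: _]/(a e i * 0) mulr0.
Qed.

Lemma crit (v : I -> S) : (forall e, \sum_i f (a e i) * v i = 0) ->
  exists cs : seq (S * {ffun I -> R}), (forall c, c \in cs -> sol c.2) /\
     forall i, v i = \sum_(c <- cs) c.1 * f (c.2 i).
Proof.
move=> hv.
pose t := [seq (1%:Z, (col i, v i)) | i <- index_enum I].
have tz_img : tensor_zero f [seq (u.1, (val u.2.1, u.2.2)) | u <- t].
  apply/tensor_zeroE.
  apply: (@tz_ext _ _ f _ (fun p => \sum_i dl (colv i) (v i) p)).
    by move=> p; rewrite !big_map; apply: eq_bigr => i _; rewrite mul1r.
  apply: (@eqv_tz _ _ f _ _ (fun p => \sum_i \sum_e dl (ee e) (f (a e i) * v i) p)).
    apply: eqv_sum => i; rewrite colv_dec.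
    apply: eqv_trans (dl_suml _ _ _ _) _.
    by apply: eqv_sum => e; apply: dl_bal.
  apply: (@tz_ext _ _ f _ (fun p => \sum_e \sum_i dl (ee e) (f (a e i) * v i) p)).
    by move=> p; rewrite exchange_big.
  apply: (@eqv_tz _ _ f _ _ (fun p => \sum_e dl (ee e) (\sum_i f (a e i) * v i) p)).
    by apply: eqv_sum => e; apply: eqv_sym; apply: dl_sumr.
  apply: (@eqv_tz _ _ f _ _ (fun p => \sum_(e : E) 0)).
    by apply: eqv_sum => e; rewrite hv; apply: dl_0r.
  by apply: tz_ext (tz0 _ _) => p; rewrite big1.
have tzt : tensor_zero f t.
  apply: (flat (g := fun x : MT => val x)) => //; exact: val_inj.
have Wt := Psi_tz WS0 WSD WSZ tzt (@WS_rel).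
have Wv : WS [ffun j => v j].
  have -> : [ffun j => v j] = Psi phi t +
     (\sum_i [ffun j => v i * f (pre (col i) j - ((i == j) : nat)%:R)]) *~ -1.
    apply/ffunP => j; rewrite /Psi big_map !ffunE /= !sum_ffunE -sumrB.
    under eq_bigr => i _ do rewrite ffunMzE mulr1z !ffunE /= rmorphB /= mulrBr opprB addrC subrK.
    rewrite (bigD1 j) //= eqxx rmorph1 mulr1 big1 ?addr0 //.
    by move=> i /negbTE ne; rewrite ne rmorph0 mulr0.
  apply: WSD => //; apply: WSZ; apply: (W_sum WS0 WSD) => i.
  by apply: WS1; apply: sol_pre.
case: Wv => cs [hcs e]; exists cs; split => // i.
have := congr1 (fun w : {ffun I -> S} => w i) e; rewrite ffunE sum_ffunE => ->.
by apply: eq_bigr => c _; rewrite ffunE.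
Qed.

End Crit.

Local Open Scope quotient_scope.

Lemma sum_option (V : nmodType) (T : finType) (F : option T -> V) :
  \sum_(i : option T) F i = F None + \sum_i F (Some i).
Proof.
rewrite (bigD1 None) //=; congr (_ + _).
rewrite (reindex_omap Some (fun o => o)) //=; last by case.
by apply: eq_bigl => j; rewrite eqxx.
Qed.

Lemma eqv_sum_in (R S : comPzRingType) (f : {rmorphism R -> S}) (M : lmodType R)
  (I : eqType) (r : seq I) (F G : I -> M * S -> int) :
  (forall i, i \in r -> eqv f (F i) (G i)) ->
  eqv f (fun p => \sum_(i <- r) F i p) (fun p => \sum_(i <- r) G i p).
Proof.
elim: r => [|i r IH] h.
  by apply: tz_ext (tz0 _ _) => p; rewrite !big_nil subrr.
have h' : forall j, j \in r -> eqv f (F j) (G j).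
  by move=> j jin; apply: h; rewrite inE jin orbT.
apply: tz_ext (eqvD (h i (mem_head _ _)) (IH h')) => p.
by rewrite !big_cons.
Qed.

Section Faithful.
Variables (R S : comPzRingType) (f : {rmorphism R -> S}).
Variable J : R -> Prop.
Hypotheses (J0 : J 0) (JD : forall a b, J a -> J b -> J (a + b))
  (JM : forall r a, J a -> J (r * a)).

Lemma JN a : J a -> J (- a).
Proof. by move=> h; rewrite -mulN1r; apply: JM. Qed.
Lemma JB a b : J a -> J b -> J (a - b).
Proof. by move=> h1 h2; apply: JD => //; apply: JN. Qed.

Definition qe (a b : R) : bool := cdec (J (a - b)).
Lemma qe_refl : reflexive qe.
Proof. by move=> a; apply/cdecP; rewrite subrr. Qed.
Lemma qe_sym : symmetric qe.
Proof.
move=> a b; rewrite /qe; apply/idP/idP => /cdecP h; apply/cdecP; rewrite -opprB; exact: JN.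
Qed.
Lemma qe_trans : transitive qe.
Proof.
move=> b a c /cdecP h1 /cdecP h2; apply/cdecP.
by rewrite -(subrK b a) -addrA; apply: JD => //; rewrite addrC.
Qed.

Definition qrel := EquivRel qe qe_refl qe_sym qe_trans.
Local Notation Q := {eq_quot qrel}.

Lemma piJ a b : J (a - b) -> \pi_Q a = \pi_Q b.
Proof. by move=> h; apply/eqquotP; apply/cdecP. Qed.
Lemma Jpi a b : \pi_Q a = \pi_Q b -> J (a - b).
Proof. by move/eqquotP/cdecP. Qed.
Lemma rpi a : J (repr (\pi_Q a) - a).
Proof. by apply: Jpi; rewrite reprK. Qed.

Definition qzero : Q := \pi_Q 0.
Definition qadd_def (x y : Q) : Q := \pi_Q (repr x + repr y).
Definition qopp_def (x : Q) : Q := \pi_Q (- repr x).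
Definition qscale_def (r : R) (x : Q) : Q := \pi_Q (r * repr x).
Fact qkey : unit. Proof. exact: tt. Qed.
Definition qadd := locked_with qkey qadd_def.
Definition qopp := locked_with qkey qopp_def.
Definition qscale := locked_with qkey qscale_def.

Lemma qaddE a b : qadd (\pi_Q a) (\pi_Q b) = \pi_Q (a + b).
Proof.
rewrite /qadd unlock; apply: piJ; have := JD (rpi a) (rpi b).
by rewrite opprD addrACA.
Qed.
Lemma qoppE a : qopp (\pi_Q a) = \pi_Q (- a).
Proof. by rewrite /qopp unlock; apply: piJ; rewrite opprK addrC -opprB; apply: JN; apply: rpi. Qed.
Lemma qscaleE r a : qscale r (\pi_Q a) = \pi_Q (r * a).
Proof. by rewrite /qscale unlock; apply: piJ; rewrite -mulrBr; apply: JM; apply: rpi. Qed.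

Lemma qaddA : associative qadd.
Proof.
by elim/quotW=> a; elim/quotW=> b; elim/quotW=> c; rewrite !qaddE addrA.
Qed.
Lemma qaddC : commutative qadd.
Proof. by elim/quotW=> a; elim/quotW=> b; rewrite !qaddE addrC. Qed.
Lemma qadd0 : left_id qzero qadd.
Proof. by elim/quotW=> a; rewrite qaddE add0r. Qed.
Lemma qaddN : left_inverse qzero qopp qadd.
Proof. by elim/quotW=> a; rewrite qoppE qaddE addNr. Qed.

HB.instance Definition _ := GRing.isZmodule.Build Q qaddA qaddC qadd0 qaddN.

Lemma qscaleA c d x : qscale c (qscale d x) = qscale (c * d) x.
Proof. by elim/quotW: x => a; rewrite !qscaleE mulrA. Qed.
Lemma qscale1 : left_id 1 qscale.
Proof. by elim/quotW=> a; rewrite qscaleE mul1r. Qed.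
Lemma qscaleDr : right_distributive qscale qadd.
Proof. by move=> c; elim/quotW=> a; elim/quotW=> b; rewrite !qaddE !qscaleE qaddE mulrDr. Qed.
Lemma qscaleDl x : {morph qscale^~ x : c d / c + d >-> qadd c d}.
Proof. by elim/quotW: x => a c d; rewrite !qscaleE qaddE mulrDl. Qed.

HB.instance Definition _ := GRing.Zmodule_isLmodule.Build R Q qscaleA qscale1 qscaleDr qscaleDl.

Lemma faithful_ideal : faithfully_flat f ->
  forall cs : seq (S * R), (forall c, c \in cs -> J c.2) ->
  1 = \sum_(c <- cs) c.1 * f c.2 -> J 1.
Proof.
move=> [_ ff] cs hcs h1.
suff : (\pi_Q 1 : Q) = 0 by move/Jpi; rewrite subr0.
apply: ff => t; apply/tensor_zeroE.
have hdl : forall (m : Q) s, tz f (dl m s).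
  move=> m s.
  have -> : s = \sum_(c <- cs) f c.2 * (c.1 * s).
    by rewrite -{1}(mul1r s) h1 mulr_suml; apply: eq_bigr => c _; rewrite mulrCA mulrA.
  apply: eqv_tz (dl_sumr _ _ _ _) _.
  apply: (@eqv_tz _ _ f _ _ (fun p => \sum_(c <- cs) 0)); last by apply: tz_ext (tz0 _ _) => p; rewrite big1.
  apply: eqv_sum_in => c cin.
  apply: eqv_trans (eqv_sym (dl_bal _ _ _ _)) _.
  have -> : c.2 *: m = 0.
    elim/quotW: m => a; rewrite [_ *: _]qscaleE; apply: piJ; rewrite subr0.
    by rewrite mulrC; apply: JM; apply: hcs.
  exact: dl_0l.
elim: t => [|u t IH]; first by apply: tz_ext (tz0 _ _) => p; rewrite big_nil.
apply: tz_ext (tzD (tzZ u.1 (hdl u.2.1 u.2.2)) IH) => p; by rewrite big_cons.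
Qed.

End Faithful.

Local Close Scope quotient_scope.

Section Descent.
Variables (R S : comPzRingType) (f : {rmorphism R -> S}).

Lemma nth_mapf (s : seq R) i : (map f s)`_i = f s`_i.
Proof.
case: (ltnP i (size s)) => h; first by rewrite (nth_map 0).
by rewrite !nth_default ?size_map // rmorph0.
Qed.

Lemma sum_size_map (V : nmodType) (T : Type) (g : T -> S) (s : seq T) (F : nat -> V) :
  \sum_(i < size (map g s)) F i = \sum_(i < size s) F i.
Proof. by rewrite -(big_mkord xpredT) size_map big_mkord. Qed.

Lemma in_ideal_map (s : seq R) a : in_ideal s a -> in_ideal (map f s) (f a).
Proof.
move=> [c ->]; exists (fun i => f (c i)).
rewrite rmorph_sum /= (sum_size_map _ _ (fun i => f (c i) * (map f s)`_i)).
by apply: eq_bigr => i _; rewrite rmorphM nth_mapf.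
Qed.

Definition ocoef n (u : option 'I_n -> R) (k : nat) : R :=
  if insub k is Some j then u (Some j) else 0.

Lemma ocoefE n (u : option 'I_n -> R) (i : 'I_n) : ocoef u i = u (Some i).
Proof. by rewrite /ocoef valK. Qed.

Lemma descent : faithfully_flat f -> forall (s : seq R) r,
  in_ideal (map f s) (f r) -> in_ideal s r.
Proof.
move=> ffl s r [c hc].
have flat : flat_map f by case: ffl.
pose a := fun (_ : unit) (i : option 'I_(size s)) =>
  if i is Some j then - s`_j else r.
pose v := fun i : option 'I_(size s) => if i is Some j then c j else 1.
have hv : forall e, \sum_i f (a e i) * v i = 0.
  move=> e; rewrite sum_option /= mulr1 hc.
  rewrite (sum_size_map _ _ (fun i => c i * (map f s)`_i)) -big_split; apply: big1 => i _ /=.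
  by rewrite rmorphN nth_mapf mulNr mulrC subrr.
have [cs [hsol hvs]] := crit flat hv.
rewrite -[r]mul1r.
apply: (@faithful_ideal R S f (fun b => in_ideal s (b * r)) _ _ _ ffl [seq (c.1, c.2 None) | c : S * {ffun option 'I_(size s) -> R} <- cs]).
- by exists (fun _ => 0); rewrite mul0r big1 // => i _; rewrite mul0r.
- move=> b1 b2 [c1 h1] [c2 h2]; exists (fun i => c1 i + c2 i).
  by rewrite mulrDl h1 h2 -big_split; apply: eq_bigr => i _; rewrite mulrDl.
- move=> r' b [c1 h]; exists (fun i => r' * c1 i).
  by rewrite -mulrA h mulr_sumr; apply: eq_bigr => i _; rewrite mulrA.
- move=> c' /mapP [c0 cin ->] /=; have := hsol c0 cin tt.
  rewrite sum_option /= => h; exists (ocoef c0.2).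
  apply/eqP; rewrite mulrC -subr_eq0 -sumrN; apply/eqP; rewrite -[RHS]h; congr (_ + _).
  by apply: eq_bigr => i _; rewrite ocoefE mulNr mulrC.
- by rewrite big_map; have := hvs None.
Qed.

End Descent.

Section Koszul.
Variable (T : comPzRingType) (l : nat) (x : seq T).

Definition delta (I : {set 'I_l}) (I' : {set 'I_l}) : T := ((I' == I) : nat)%:R.

Lemma kdiff_lin (c : {set 'I_l} -> T) J :
  kdiff x c J = \sum_I c I * kdiff x (delta I) J.
Proof.
rewrite /kdiff; under [RHS]eq_bigr => I _ do rewrite mulr_sumr.
rewrite exchange_big /=; apply: eq_bigr => j _.
rewrite (bigD1 (j |: J)) //= big1 ?addr0.
  by rewrite /delta eqxx mulr1 mulrC.
by move=> I /negbTE ne; rewrite /delta eq_sym ne mulr0 mulr0.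
Qed.

Lemma kdiff_lin2 (a : T) (g h : {set 'I_l} -> T) J :
  kdiff x (fun I => a * g I + h I) J = a * kdiff x g J + kdiff x h J.
Proof.
rewrite /kdiff mulr_sumr -big_split /=; apply: eq_bigr => j _; ring.
Qed.

Lemma kdiff_ext (c c' : {set 'I_l} -> T) J : (forall I, c I = c' I) -> kdiff x c J = kdiff x c' J.
Proof. by move=> h; rewrite /kdiff; apply: eq_bigr => j _; rewrite h. Qed.

Lemma kmap_ext k (c c' : {set 'I_l} -> T) J : (forall I, c I = c' I) -> kmap x k c J = kmap x k c' J.
Proof. by move=> h; rewrite /kmap h. Qed.

Lemma kdiff0 (J : {set 'I_l}) : kdiff x (fun _ => 0) J = 0.
Proof. by rewrite /kdiff big1 // => j _; rewrite mulr0. Qed.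

Lemma kmap_lin2 k (a : T) (g h : {set 'I_l} -> T) J :
  kmap x k (fun I => a * g I + h I) J = a * kmap x k g J + kmap x k h J.
Proof. rewrite /kmap; ring. Qed.

Lemma kmap0 k (J : {set 'I_l}) : kmap x k (fun _ => 0) J = 0.
Proof. by rewrite /kmap mulr0. Qed.

End Koszul.

Section Transport.
Variables (R S : comPzRingType) (f : {rmorphism R -> S}).

Lemma spow_map (x : seq R) m : spow (map f x) m = map f (spow x m).
Proof. by rewrite /spow -!map_comp; apply: eq_map => b /=; rewrite rmorphXn. Qed.

Lemma kdiff_map l (x : seq R) (c : {set 'I_l} -> R) J :
  kdiff (map f x) (fun I => f (c I)) J = f (kdiff x c J).
Proof.
rewrite /kdiff rmorph_sum; apply: eq_bigr => j _.
by rewrite !rmorphM rmorphXn rmorphN1 nth_mapf.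
Qed.

Lemma kmap_map l (x : seq R) k (c : {set 'I_l} -> R) J :
  kmap (map f x) k (fun I => f (c I)) J = f (kmap x k c J).
Proof.
rewrite /kmap rmorphM rmorph_prod; congr (_ * _); apply: eq_bigr => j _.
by rewrite rmorphXn nth_mapf.
Qed.

Lemma delta_map l (I I' : {set 'I_l}) : f (delta R I I') = delta S I I'.
Proof. by rewrite /delta rmorph_nat. Qed.

Definition WPl (T : comPzRingType) (l : nat) (x : seq T) : Prop :=
  forall n : nat, exists m : nat, (n <= m)%N /\
    forall i : nat, (1 <= i)%N ->
    forall z : {set 'I_l} -> T, homog i z ->
      (forall J, kdiff (spow x m) z J = 0) ->
      exists w : {set 'I_l} -> T, homog i.+1 w /\
        forall J, kdiff (spow x n) w J = kmap x (m - n) z J.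

Hypothesis flat : flat_map f.

Lemma WPl_map l (x : seq R) : WPl l x -> WPl l (map f x).
Proof.
move=> hx n; have [m [nm hm]] := hx n; exists m; split => // i hi z hz hcyc.
pose a := fun (e : {set 'I_l} + {set 'I_l}) (I : {set 'I_l}) =>
  match e with
  | inl J => kdiff (spow x m) (delta R I) J
  | inr K => if #|K| != i then delta R I K else 0
  end.
have hv : forall e, \sum_I f (a e I) * z I = 0.
  case=> [J|K] /=.
    transitivity (kdiff (spow (map f x) m) z J); last exact: hcyc J.
    rewrite [RHS]kdiff_lin; apply: eq_bigr => I _.
    rewrite -kdiff_map spow_map mulrC; congr (_ * _); apply: kdiff_ext => I'.
    by rewrite delta_map.
  case hK: (#|K| != i); last by rewrite big1 // => I _; rewrite rmorph0 mul0r.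
  rewrite (bigD1 K) //= big1 ?addr0.
    by rewrite delta_map /delta eqxx mul1r; apply: hz.
  by move=> I /negbTE ne; rewrite delta_map /delta eq_sym ne mul0r.
have [cs [hsol hvs]] := crit flat hv.
have hsol' : forall c, c \in cs -> homog i c.2 /\ (forall J, kdiff (spow x m) c.2 J = 0).
  move=> c cin; have := hsol c cin => hs; split.
    move=> K hK; have := hs (inr K); rewrite /= hK (bigD1 K) //= big1 ?addr0.
      by rewrite /delta eqxx mul1r.
    by move=> I /negbTE ne; rewrite /delta eq_sym ne mul0r.
  move=> J; have := hs (inl J); rewrite /= => h.
  rewrite kdiff_lin -[X in _ = X]h; apply: eq_bigr => I _; by rewrite mulrC.
suff : exists w : {set 'I_l} -> S, homog i.+1 w /\
   forall J, kdiff (spow (map f x) n) w J =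
     kmap (map f x) (m - n) (fun I => \sum_(c <- cs) c.1 * f (c.2 I)) J.
  move=> [w [hw1 hw2]]; exists w; split => // J; rewrite hw2 /kmap hvs //.
elim: cs {hsol hvs} hsol' => [|c cs IH] hcs.
  exists (fun _ => 0); split => // J.
  rewrite kdiff0 /kmap big_nil mulr0 //.
have [w1 [hw1 hw1']] : exists w : {set 'I_l} -> S, homog i.+1 w /\
   forall J, kdiff (spow (map f x) n) w J =
     kmap (map f x) (m - n) (fun I => \sum_(c <- cs) c.1 * f (c.2 I)) J.
  by apply: IH => c' h; apply: hcs; rewrite inE h orbT.
have [hc1 hc2] := hcs c (mem_head _ _).
have [w0 [hw0 hw0']] := hm i hi c.2 hc1 hc2.
exists (fun I => c.1 * f (w0 I) + w1 I); split.
  by move=> K hK; rewrite hw0 // hw1 // rmorph0 mulr0 addr0.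
move=> J; rewrite kdiff_lin2 hw1' spow_map kdiff_map hw0'.
rewrite (kmap_ext _ _ _ (fun I => big_cons _ _ _ _ _ _)).
by rewrite kmap_lin2 -kmap_map.
Qed.

End Transport.

Section Params.
Variables (R S : comPzRingType) (f : {rmorphism R -> S}).
Hypothesis ffl : faithfully_flat f.

Lemma cech_y_map (x : seq R) : cech_y (map f x) = f (cech_y x).
Proof.
rewrite /cech_y rmorph_prod -(big_mkord xpredT) size_map big_mkord.
by apply: eq_bigr => i _; rewrite nth_mapf.
Qed.

Lemma prime_map (x : seq R) :
  (forall P, prime_ideal P -> (forall a, in_ideal x a -> P a) -> cech_top_loc_nonzero x P) ->
  (forall P', prime_ideal P' -> (forall a, in_ideal (map f x) a -> P' a) ->
     cech_top_loc_nonzero (map f x) P').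
Proof.
have flat : flat_map f by case: ffl.
move=> hx P' [P0 PD PM P1 Pp] hcont.
have hp : prime_ideal (fun b => P' (f b)).
  split; first by rewrite rmorph0.
  - by move=> a b ha hb; rewrite rmorphD; apply: PD.
  - by move=> r a ha; rewrite rmorphM; apply: PM.
  - by rewrite rmorph1.
  - by move=> a b; rewrite rmorphM; apply: Pp.
have [a [n0 ha]] := hx _ hp (fun b hb => hcont _ (in_ideal_map f hb)).
exists (f a), n0 => s' hs' [k [t [b hb]]].
move: hb; rewrite cech_y_map (sum_size_map _ _ (fun j => b j * (map f x)`_j ^+ k)) => hb.
set X := cech_y x in hb.
pose A := fun (_ : unit) (i : option 'I_(size x)) =>
  if i is Some j then - (X ^+ t * x`_j ^+ k * X ^+ n0) else X ^+ t * a * X ^+ k.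
pose v := fun i : option 'I_(size x) => if i is Some j then b j else s'.
have hv : forall e, \sum_i f (A e i) * v i = 0.
  move=> e; rewrite sum_option /= -[RHS]hb mulrBr mulr_suml mulr_sumr -sumrN.
  congr (_ + _); first by rewrite !rmorphM !rmorphXn; ring.
  by apply: eq_bigr => j _; rewrite nth_mapf rmorphN !rmorphM !rmorphXn; ring.
have [cs [hsol hvs]] := crit flat hv.
apply: hs'; have -> : s' = \sum_(c <- cs) c.1 * f (c.2 None) by exact: hvs None.
rewrite big_seq; apply: big_ind => //.
move=> c cin; apply: PM.
case: (excluded_middle_informative (P' (f (c.2 None)))) => // hn.
exfalso; apply: (ha _ hn); exists k, t, (ocoef c.2).
have := hsol c cin tt; rewrite sum_option /= => h.
rewrite -[RHS]h mulrBr mulr_suml mulr_sumr -sumrN; congr (_ + _); first by ring.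
by apply: eq_bigr => j _; rewrite ocoefE; ring.
Qed.

Lemma param_map (x : seq R) : parameter_seq x -> parameter_seq (map f x).
Proof.
case=> [->|[hwp hn hpr]]; first by left.
right; split.
- have h := WPl_map (proj1 ffl) hwp; rewrite -(size_map f x) in h; exact: h.
- move=> h; apply: hn; apply: (descent ffl); by rewrite rmorph1.
- exact: prime_map.
Qed.

End Params.

Theorem proposition4p5 (R S : comPzRingType) (f : {rmorphism R -> S}) :
  faithfully_flat f -> cohen_macaulay S -> cohen_macaulay R.
Proof.
move=> ffl hS x hx.
have hy : strong_parameter_seq (map f x).
  move=> i; rewrite size_map => hi; rewrite -map_take; apply: param_map => //.
  exact: hx.
have [hreg hn1] := hS _ hy.
split.
- move=> i hi r hin.
  apply: (descent ffl); rewrite map_take.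
  have hi' : (i < size (map f x))%N by rewrite size_map.
  apply: (hreg i hi' (f r)).
  rewrite -map_take nth_mapf -rmorphM; exact: in_ideal_map.
- move=> h1; apply: hn1; rewrite -(rmorph1 f); exact: in_ideal_map.
Qed.
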